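(* In the setting of the OMD iteration $\pi^{(1)}=\pi^{\mathrm{ref}}$, $\pi^{(t+1)}(a)\propto(\pi^{\mathrm{ref}}(a))^{1/t}(\pi^{(t)}(a))^{(t-1)/t}\exp(\frac\eta tQ^{(t)}(a))$, with $Q^{(t)}\in[0,1]^{\mathcal A}$ and $f^{(t)}(\pi)=\langle\pi,Q^{(t)}\rangle-\eta^{-1}\mathrm{KL}(\pi\|\pi^{\mathrm{ref}})$, the following hold for all $t\ge1$: (i) $\pi^{(t+1)}(a)\propto\pi^{\mathrm{ref}}(a)\exp\big(\frac\eta t\sum_{k=1}^tQ^{(k)}(a)\big)$, and $\pi^{(t+1)}=\arg\max_{\pi\in\Delta(\mathcal A)}\sum_{k=1}^tf^{(k)}(\pi)$; (ii) $\|\pi^{(t+1)}-\pi^{(t)}\|_1\le\frac{2\eta}{2t-1}$ and $f^{(t)}(\pi^{(t+1)})-f^{(t)}(\pi^{(t)})\le\frac{2\eta}{2t-1}$; (iii) for every $T\ge1$ and every $\pi^*\in\Delta(\mathcal A)$, $\sum_{t=1}^T\big(f^{(t)}(\pi^* )-f^{(t)}(\pi^{(t)})\big)\le2\eta(1+\log T)$.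
   Context: $\mathcal A$ finite, $\pi^{\mathrm{ref}}\in\Delta(\mathcal A)$ with full support, $\eta>0$; $\mathrm{KL}(p\|q)=\sum_ap(a)\log(p(a)/q(a))$; $\|\cdot\|_1$ is the $\ell_1$ norm on $\mathbb R^{\mathcal A}$. *)

(* Defs.v *)
From HB Require Import structures.
From mathcomp Require Import all_boot all_order all_algebra.
From mathcomp Require Import all_classical all_reals all_analysis.
Set Implicit Arguments. Unset Strict Implicit. Unset Printing Implicit Defensive.
Import Order.TTheory GRing.Theory Num.Theory.
Local Open Scope ring_scope.

Section Defs.
Variables (R : realType) (A : finType).

Definition in_simplex (p : A -> R) : Prop :=
  (forall a, 0 <= p a) /\ \sum_(a : A) p a = 1.

Definition KL (p q : A -> R) : R := \sum_(a : A) p a * ln (p a / q a).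

Definition l1dist (p q : A -> R) : R := \sum_(a : A) `|p a - q a|.

Definition fobj (piref : A -> R) (eta : R) (Q : nat -> A -> R) (t : nat)
  (pi : A -> R) : R :=
  \sum_(a : A) pi a * Q t a - eta^-1 * KL pi piref.

Definition omd_step (piref : A -> R) (eta : R) (Q : nat -> A -> R) (t : nat)
  (pit : A -> R) : A -> R :=
  let w := fun a => piref a `^ (t%:R^-1) * pit a `^ ((t%:R - 1) / t%:R)
                    * expR (eta / t%:R * Q t a) in
  fun a => w a / \sum_(b : A) w b.

(* omd t = pi^(t) for t >= 1 (omd 0 is an unused dummy equal to pi_ref):
   pi^(1) = pi_ref, pi^(t+1) = omd_step t pi^(t). *)
Fixpoint omd (piref : A -> R) (eta : R) (Q : nat -> A -> R) (t : nat)
  : A -> R :=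
  match t with
  | 0 => piref
  | n.+1 => if n == 0%N then piref else omd_step piref eta Q n (omd piref eta Q n)
  end.

End Defs.

(* Main.v *)
Require Import Defs.
From HB Require Import structures.
From mathcomp Require Import all_boot all_order all_algebra.
From mathcomp Require Import all_classical all_reals all_analysis.
From mathcomp Require Import ring lra.
Import Order.TTheory GRing.Theory Num.Theory.
Set Implicit Arguments. Unset Strict Implicit. Unset Printing Implicit Defensive.
Local Open Scope ring_scope.

Section Aux.
Variable R : realType.

Lemma lnMp (x y : R) : 0 < x -> 0 < y -> ln (x * y) = ln x + ln y.
Proof. by move=> hx hy; rewrite lnM ?posrE. Qed.

Lemma lndp (x y : R) : 0 < x -> 0 < y -> ln (x / y) = ln x - ln y.
Proof. by move=> hx hy; rewrite ln_div ?posrE. Qed.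

Lemma lnKp (x : R) : 0 < x -> expR (ln x) = x.
Proof. by move=> hx; rewrite lnK ?posrE. Qed.

Lemma powRp (x y : R) : 0 < x -> x `^ y = expR (y * ln x).
Proof. by move=> hx; rewrite /powR gt_eqF. Qed.

Lemma ln_le_sub1 (y : R) : 0 < y -> ln y <= y - 1.
Proof. by move=> hy; have := expR_ge1Dx (ln y); rewrite lnKp //; lra. Qed.

Lemma ln_ge_1sub (y : R) : 0 < y -> 1 - y^-1 <= ln y.
Proof.
move=> hy; have := expR_ge1Dx (- ln y); rewrite expRN lnKp //; lra.
Qed.

Lemma ln_eq_sub1 (y : R) : 0 < y -> ln y = y - 1 -> y = 1.
Proof.
move=> hy he; have [/eqP l0|l0] := boolP (ln y == 0).
  by rewrite -(lnKp hy) l0 expR0.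
have := expR_gt1Dx l0; rewrite lnKp //; lra.
Qed.

Lemma tanh_aux (x : R) : 0 <= x -> expR x * (2 - x) <= 2 + x.
Proof.
rewrite le0r => /orP[/eqP->|x0]; first by rewrite expR0; lra.
pose psi := fun y : R => 2 + y - expR y * (2 - y).
pose dpsi := fun y : R => 1 + expR y * (y - 1).
have D : forall y : R, is_derive y (1:R) psi (dpsi y).
  move=> y; rewrite /psi /dpsi.
  apply: is_derive_eq.
  have sE : forall a b : R, a *: b = a * b := fun _ _ => erefl.
  rewrite /= !sE. ring.
have [c _ H] := @MVT R psi dpsi 0 x x0 (fun y _ => D y) (derivable_within_continuous (fun y _ => @ex_derive _ _ _ _ _ _ _ (D y))).
have : 0 <= psi x - psi 0.
  rewrite H; apply: mulr_ge0; last lra.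
  rewrite /dpsi.
  have := expR_ge1Dx (- c).
  rewrite expRN => h.
  have ec : 0 < expR c by apply: expR_gt0.
  have : expR c * (1 - c) <= 1.
    have h2 : (1 - c) * expR c <= (expR c)^-1 * expR c by rewrite ler_pM2r //; lra.
    by rewrite mulVf ?gt_eqF // mulrC in h2.
  lra.
rewrite /psi expR0; lra.
Qed.

Lemma gibbs_term (pa qa : R) : 0 <= pa -> 0 < qa ->
  0 <= qa - pa + pa * ln (pa / qa) /\
  (qa - pa + pa * ln (pa / qa) = 0 -> pa = qa).
Proof.
move=> hp hq; rewrite le0r in hp; case/orP: hp => [/eqP->|hp].
  by rewrite mul0r subr0 addr0; split; [lra| move=> h; lra].
have hy : 0 < qa / pa by apply: divr_gt0.
have E : ln (pa / qa) = - ln (qa / pa).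
  by rewrite !lndp //; ring.
have hl := ln_le_sub1 hy.
have K : pa * (qa / pa - 1) = qa - pa by field; rewrite gt_eqF.
split.
  rewrite E; have : pa * ln (qa / pa) <= pa * (qa / pa - 1) by rewrite ler_pM2l.
  lra.
rewrite E => h.
have h3 : pa * ln (qa / pa) = pa * (qa / pa - 1) by lra.
have := ln_eq_sub1 hy (mulfI (lt0r_neq0 hp) h3).
move=> h4; have : qa = (qa / pa) * pa by rewrite divfK ?gt_eqF.
by rewrite h4 mul1r.
Qed.

Lemma l1_generic (A : finType) (p q u : A -> R) (lam rho : R) :
  (forall a, 0 <= p a) -> \sum_a p a = 1 -> \sum_a q a = 1 ->
  0 < lam -> 0 < rho ->
  (forall a, q a = lam * p a * expR (u a)) ->
  (forall a, - rho <= u a <= rho) ->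
  \sum_a `|q a - p a| <= rho.
Proof.
move=> hp sp sq hlam hrho hq hu.
pose X a := expR (u a).
pose M := \sum_a p a * X a.
pose m0 := expR (- rho). pose M0 := expR rho.
have hm0 : 0 < m0 by apply: expR_gt0.
have hM0 : 0 < M0 by apply: expR_gt0.
have m0M0 : m0 * M0 = 1 by rewrite /m0 /M0 -expRD addNr expR0.
have Xb : forall a, m0 <= X a <= M0.
  move=> a; have := hu a => /andP[h1 h2].
  by rewrite /m0 /M0 /X !ler_expR h1 h2.
have lamM : lam * M = 1.
  rewrite -sq /M mulr_sumr; apply: eq_bigr => a _; rewrite hq /X; ring.
have Mb : m0 <= M <= M0.
  apply/andP; split.
    rewrite -[m0]mul1r -sp mulr_suml /M; apply: ler_sum => a _.
    by rewrite ler_wpM2l // (andP (Xb a)).1.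
  rewrite -[M0]mul1r -sp mulr_suml /M; apply: ler_sum => a _.
  by rewrite ler_wpM2l // (andP (Xb a)).2.
have m0lt : m0 < M0 by rewrite /m0 /M0 ltr_expR; lra.
pose al := M0 * (M - m0) - m0 * (M0 - M).
pose be := (M0 - M) - (M - m0).
have pt : forall a, `|q a - p a| * (M0 - m0) <= lam * (p a * al + be * (p a * X a)).
  move=> a.
  have E : q a - p a = lam * p a * (X a - M).
    rewrite hq /X; have : lam * p a * M = p a by rewrite mulrAC lamM mul1r.
    lra.
  have hpa := hp a.
  have g0 : 0 <= lam * p a by rewrite mulr_ge0 // ltW.
  have [xa1 xa2] := andP (Xb a); have [mb1 mb2] := andP Mb.
  case: (lerP M (X a)) => hXM.
    rewrite ger0_norm; last by rewrite E mulr_ge0 //; lra.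
    have F : 0 <= lam * p a * ((M0 - X a) * (M - m0)) by rewrite mulr_ge0 // mulr_ge0 //; lra.
    have eq : lam * (p a * al + be * (p a * X a)) - (q a - p a) * (M0 - m0) = 2 * (lam * p a * ((M0 - X a) * (M - m0))).
      by rewrite E /al /be; ring.
    lra.
  rewrite ler0_norm; last by rewrite E; apply: mulr_ge0_le0 => //; lra.
  have F : 0 <= lam * p a * ((X a - m0) * (M0 - M)) by rewrite mulr_ge0 // mulr_ge0 //; lra.
  have eq : lam * (p a * al + be * (p a * X a)) - (- (q a - p a)) * (M0 - m0) = 2 * (lam * p a * ((X a - m0) * (M0 - M))).
    by rewrite E /al /be; ring.
  lra.
set L := \sum_a `|q a - p a|.
have h1 : L * (M0 - m0) <= lam * (al + be * M).
  rewrite /L mulr_suml; apply: le_trans (ler_sum _ (fun a _ => pt a)) _.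
  by rewrite -mulr_sumr big_split /= -mulr_suml -mulr_sumr sp mul1r.
have hM : 0 < M by have [mb1 _] := andP Mb; lra.
have h3 : al + be * M <= 2 * M * (M0 + m0 - 2).
  have e : 2 * M * (M0 + m0 - 2) - (al + be * M) = 2 * (M - 1) ^+ 2 + 2 * (m0 * M0 - 1).
    by rewrite /al /be; ring.
  have : 0 <= (M - 1) ^+ 2 by apply: sqr_ge0.
  rewrite m0M0 in e; lra.
have h4 : L * (M0 - m0) * M <= 2 * (M0 + m0 - 2) * M.
  have : lam * (al + be * M) * M = al + be * M.
    by rewrite mulrAC lamM mul1r.
  have : L * (M0 - m0) * M <= lam * (al + be * M) * M by rewrite ler_pM2r.
  lra.
rewrite ler_pM2r // in h4.
have M01 : 1 < M0 by have := expR_gt1Dx (lt0r_neq0 hrho); rewrite /M0; lra.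
have th := tanh_aux (ltW hrho); rewrite -/M0 in th.
have h5 : L * (M0 * M0 - 1) <= 2 * (M0 - 1) * (M0 - 1).
  have : L * (M0 - m0) * M0 <= 2 * (M0 + m0 - 2) * M0 by rewrite ler_pM2r.
  have e1 : L * (M0 - m0) * M0 = L * (M0 * M0 - 1) by rewrite -m0M0; ring.
  have e2 : 2 * (M0 + m0 - 2) * M0 = 2 * (M0 - 1) * (M0 - 1).
    have : 2 * (M0 + m0 - 2) * M0 - 2 * (M0 - 1) * (M0 - 1) = 2 * (m0 * M0 - 1) by ring.
    rewrite m0M0 subrr mulr0; lra.
  lra.
have h6 : 2 * (M0 - 1) * (M0 - 1) <= rho * (M0 * M0 - 1).
  have : (2 * (M0 - 1)) * (M0 - 1) <= (rho * (M0 + 1)) * (M0 - 1) by rewrite ler_pM2r; lra.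
  have : (rho * (M0 + 1)) * (M0 - 1) = rho * (M0 * M0 - 1) by ring.
  lra.
have hpos : 0 < M0 * M0 - 1 by nra.
by rewrite -(ler_pM2r hpos); lra.
Qed.
End Aux.

Section Main.
Variables (R : realType) (A : finType) (piref : A -> R) (eta : R) (Q : nat -> A -> R).
Hypotheses (Hpiref : in_simplex piref) (Hfull : forall a, 0 < piref a) (Heta : 0 < eta)
  (HQ : forall t a, (1 <= t)%N -> 0 <= Q t a <= 1).

Definition Ssum (t : nat) (a : A) : R := \sum_(1 <= k < t.+1) Q k a.
Definition gw (t : nat) (a : A) : R := piref a * expR (eta / t%:R * Ssum t a).
Definition Zs (t : nat) : R := \sum_b gw t b.

Lemma Ssum0 a : Ssum 0 a = 0.
Proof. by rewrite /Ssum big_geq. Qed.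

Lemma SsumS t a : Ssum t.+1 a = Ssum t a + Q t.+1 a.
Proof. by rewrite /Ssum big_nat_recr. Qed.

Lemma Ssum_bnd t a : 0 <= Ssum t a <= t%:R.
Proof.
elim: t => [|t IH]; first by rewrite Ssum0 lexx.
rewrite SsumS -natr1; have := HQ a (isT : (1 <= t.+1)%N); lra.
Qed.

Lemma gw_gt0 t a : 0 < gw t a.
Proof. by rewrite /gw mulr_gt0 // expR_gt0. Qed.

Lemma Zs_gt0 t : 0 < Zs t.
Proof.
rewrite /Zs; case: (pickP (fun _ : A => true)) => [a _|h].
  rewrite (bigD1 a) //=; apply: ltr_pwDl; first exact: gw_gt0.
  by apply: sumr_ge0 => b _; exact: ltW (gw_gt0 _ _).
exfalso; have := proj2 Hpiref; rewrite big_pred0 // => /eqP; rewrite eq_sym oner_eq0 //.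
Qed.

Lemma omd_closed t a : omd piref eta Q t.+1 a = gw t a / Zs t.
Proof.
elim: t a => [|t IH] a.
  rewrite /= /gw /Zs.
  have e : forall b, piref b * expR (eta / 0%:R * Ssum 0 b) = piref b.
    by move=> b; rewrite Ssum0 mulr0 expR0 mulr1.
  rewrite (eq_bigr _ (fun b _ => e b)) e (proj2 Hpiref) divr1 //.
have E : omd piref eta Q t.+1 = fun a => gw t a / Zs t by apply: funext => b; rewrite IH.
have -> : omd piref eta Q t.+2 = omd_step piref eta Q t.+1 (omd piref eta Q t.+1) by [].
rewrite E /omd_step.
pose K := expR (- (t%:R / (t%:R + 1)) * ln (Zs t)).
have W : forall b, piref b `^ (t.+1%:R^-1) * (gw t b / Zs t) `^ ((t.+1%:R - 1) / t.+1%:R)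
                   * expR (eta / t.+1%:R * Q t.+1 b) = gw t.+1 b * K.
  move=> b.
  have hp := Hfull b; have hg := gw_gt0 t b; have hZ := Zs_gt0 t.
  rewrite !powRp ?divr_gt0 // lndp // /gw lnMp ?expR_gt0 // expRK.
  rewrite /K -!expRD -[piref b in RHS](lnKp hp) -!expRD SsumS -!natr1.
  congr expR.
  set n := t%:R; set S := Ssum t b; set L := ln (piref b); set lZ := ln (Zs t).
  set X := eta / n * S.
  have hX : X * n = eta * S.
    rewrite /X; case: (eqVneq t 0) => [t0|t0].
      by rewrite /S t0 Ssum0 mulr0 mul0r mulr0.
    have nz : n != 0 by rewrite /n pnatr_eq0.
    by rewrite mulrAC divfK.
  have hn : n + 1 != 0 by rewrite /n natr1 pnatr_eq0.
  apply/eqP; rewrite -subr_eq0; apply/eqP.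
  rewrite [Y in Y = _](_ : _ = (X * n - eta * S) / (n + 1)); first by rewrite hX subrr mul0r.
  by field.
rewrite (eq_bigr _ (fun b _ => W b)) W -mulr_suml -/(Zs t.+1).
have hK : K != 0 by rewrite gt_eqF ?expR_gt0.
by rewrite invfM mulrACA divff // mulr1.
Qed.

Local Notation pi := (omd piref eta Q).

Lemma pi_gt0 t a : 0 < pi t.+1 a.
Proof. by rewrite omd_closed divr_gt0 ?gw_gt0 ?Zs_gt0. Qed.

Lemma pi_simplex t : in_simplex (pi t.+1).
Proof.
split=> [a|]; first exact: ltW (pi_gt0 _ _).
under eq_bigr do rewrite omd_closed.
by rewrite -mulr_suml divff // gt_eqF // Zs_gt0.
Qed.

Lemma ln_pi t a : ln (pi t.+1 a) = ln (piref a) + eta / t%:R * Ssum t a - ln (Zs t).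
Proof.
by rewrite omd_closed lndp ?gw_gt0 ?Zs_gt0 // /gw lnMp ?expR_gt0 // expRK.
Qed.

Lemma KL_self (p : A -> R) : KL p p = 0.
Proof.
rewrite /KL big1 // => a _; have [->|h] := eqVneq (p a) 0; first by rewrite mul0r.
by rewrite divff // ln1 mulr0.
Qed.

Lemma KL_ge0 (p q : A -> R) : in_simplex p -> in_simplex q -> (forall a, 0 < q a) ->
  0 <= KL p q /\ (KL p q <= 0 -> p = q).
Proof.
move=> [hp sp] [_ sq] hq.
have e : KL p q = \sum_a (q a - p a + p a * ln (p a / q a)).
  by rewrite big_split /= sumrB sp sq subrr add0r.
have T0 : forall a, 0 <= q a - p a + p a * ln (p a / q a).
  by move=> a; exact: (gibbs_term (hp a) (hq a)).1.
have K0 : 0 <= KL p q by rewrite e; apply: sumr_ge0 => a _; exact: T0.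
split=> // hK; apply: funext => a.
have z : \sum_a (q a - p a + p a * ln (p a / q a)) = 0.
  by rewrite -e; apply/eqP; rewrite eq_le hK K0.
apply: (gibbs_term (hp a) (hq a)).2.
by apply: (psumr_eq0P (P := predT) (fun a _ => T0 a) z).
Qed.

Lemma gibbs_id t (p : A -> R) : in_simplex p ->
  \sum_(1 <= k < t.+1) fobj piref eta Q k p = t%:R / eta * (ln (Zs t) - KL p (pi t.+1)).
Proof.
move=> [hp sp].
case: (eqVneq t 0) => [->|t0]; first by rewrite big_geq // (_ : 0%:R = 0) // !mul0r.
have E1 : \sum_(1 <= k < t.+1) fobj piref eta Q k p =
    \sum_a p a * Ssum t a - t%:R * (eta^-1 * KL p piref).
  rewrite /fobj sumrB sumr_const_nat subSS subn0 mulr_natl; congr (_ - _).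
  by rewrite exchange_big; apply: eq_bigr => a _; rewrite /Ssum mulr_sumr.
have E2 : KL p piref = KL p (pi t.+1) + eta / t%:R * \sum_a p a * Ssum t a - ln (Zs t).
  rewrite /KL.
  transitivity (\sum_a (p a * ln (p a / pi t.+1 a) +
     (eta / t%:R * (p a * Ssum t a) - p a * ln (Zs t)))).
    apply: eq_bigr => a _.
    have := hp a; rewrite le0r => /orP[/eqP->|pa]; first by rewrite !mul0r mulr0 !subrr addr0.
    rewrite !lndp ?pi_gt0 // ln_pi; ring.
  by rewrite big_split /= sumrB -!mulr_sumr -mulr_suml sp mul1r addrA.
rewrite E1 E2; have tn : t%:R != 0 :> R by rewrite pnatr_eq0.
have en : eta != 0 by rewrite gt_eqF.
by field; rewrite en tn.
Qed.


Local Notation F t x := (\sum_(1 <= k < t.+1) fobj piref eta Q k x).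

Lemma F_max t p : in_simplex p -> F t p <= F t (pi t.+1).
Proof.
move=> hp; rewrite (gibbs_id t hp) (gibbs_id t (pi_simplex t)) (KL_self (pi t.+1)) subr0.
apply: ler_wpM2l; first by rewrite divr_ge0 // ltW.
have := (KL_ge0 hp (pi_simplex t) (pi_gt0 t)).1; lra.
Qed.

Lemma F_uniq t p : (1 <= t)%N -> in_simplex p -> F t (pi t.+1) <= F t p -> p = pi t.+1.
Proof.
move=> t1 hp; rewrite (gibbs_id t hp) (gibbs_id t (pi_simplex t)) (KL_self (pi t.+1)) subr0 ler_pM2l; last first.
  by rewrite divr_gt0 // ltr0n.
move=> h; apply: (KL_ge0 hp (pi_simplex t) (pi_gt0 t)).2; lra.
Qed.

Lemma BTL T p : in_simplex p ->
  F T p <= \sum_(1 <= k < T.+1) fobj piref eta Q k (pi k.+1).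
Proof.
elim: T p => [|T IH] p hp; first by rewrite !big_geq.
apply: le_trans (F_max T.+1 hp) _.
rewrite big_nat_recr //= [in X in _ <= X]big_nat_recr //=.
by rewrite lerD2r; apply: IH; exact: (pi_simplex T.+1).
Qed.

Lemma l1_step n : l1dist (pi n.+2) (pi n.+1) <= eta / n.+1%:R /\
  fobj piref eta Q n.+1 (pi n.+2) - fobj piref eta Q n.+1 (pi n.+1) <= l1dist (pi n.+2) (pi n.+1).
Proof.
set p := pi n.+1; set q := pi n.+2.
pose D a := eta / n.+1%:R * Ssum n.+1 a - eta / n%:R * Ssum n a.
pose c := if n == 0%N then eta / 2 else 0.
pose rho := eta / n.+1%:R.
pose K := ln (Zs n) - ln (Zs n.+1).
have hrho : 0 < rho by rewrite divr_gt0 // ltr0n.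
have lnqp : forall a, ln (q a) - ln (p a) = D a + K.
  by move=> a; rewrite /q /p !ln_pi /D /K; ring.
have Db : forall a, - rho <= D a - c <= rho.
  move=> a; rewrite /D /c /rho; case: (eqVneq n 0) => [->|n0].
    rewrite SsumS Ssum0 !mulr0 subr0 add0r divr1.
    have := HQ a (isT : (1 <= 1)%N) => /andP[q0 q1].
    have h1 : 0 <= eta * Q 1 a by rewrite mulr_ge0 // ltW.
    have h2 : eta * Q 1 a <= eta by rewrite -[X in _ <= X]mulr1 ler_wpM2l // ltW.
    lra.

  have nn : n%:R != 0 :> R by rewrite pnatr_eq0.
  have [s0 s1] := andP (Ssum_bnd n a).
  set S := Ssum n a.
  have hs0 : 0 <= S / n%:R by rewrite divr_ge0.
  have hs1 : S / n%:R <= 1 by rewrite ler_pdivrMr ?mul1r // ltr0n lt0n.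
  have := HQ a (isT : (1 <= n.+1)%N) => /andP[q0 q1].
  have -> : eta / n.+1%:R * Ssum n.+1 a - eta / n%:R * S - 0 =
     eta / n.+1%:R * (Q n.+1 a - S / n%:R).
    rewrite SsumS -/S -natr1; field; rewrite nn /= -?natr1.
    by rewrite natr1 pnatr_eq0.
  have h1 : 0 < eta / n.+1%:R by rewrite divr_gt0 // ltr0n.
  have : eta / n.+1%:R * (Q n.+1 a - S / n%:R) <= eta / n.+1%:R * 1.
    by rewrite ler_pM2l //; lra.
  have : eta / n.+1%:R * (-1) <= eta / n.+1%:R * (Q n.+1 a - S / n%:R).
    by rewrite ler_pM2l //; lra.
  rewrite mulrN1 mulr1 => h2 h3; apply/andP; split => //.
have qE : forall a, q a = expR (c + K) * p a * expR (D a - c).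
  move=> a; rewrite -[q a](lnKp (pi_gt0 n.+1 a)) -/q.
  have -> : ln (q a) = ln (p a) + (D a - c) + (c + K) by have := lnqp a; lra.
  by rewrite !expRD lnKp ?pi_gt0 //; ring.
have L1 : l1dist q p <= rho.
  apply: (l1_generic (u := fun a => D a - c) _ (proj2 (pi_simplex n)) (proj2 (pi_simplex n.+1)) (expR_gt0 _) hrho qE Db).
  by move=> a; apply: ltW; apply: pi_gt0.
split=> //.
have fE : forall x, fobj piref eta Q n.+1 x = F n.+1 x - F n x.
  by move=> x; rewrite big_nat_recr //= addrAC subrr add0r.
have hp := pi_simplex n; have hq := pi_simplex n.+1.
rewrite !fE !(gibbs_id _ hp) !(gibbs_id _ hq) (KL_self q) (KL_self p).
set c1 := n.+1%:R / eta; set c0 := n%:R / eta.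
have KLqp := (KL_ge0 hq hp (pi_gt0 n)).1.
have c01 : c0 <= c1 by rewrite /c0 /c1 ler_pM2r ?invr_gt0 // ler_nat.
have c00 : 0 <= c0 by rewrite /c0 divr_ge0 // ltW.
have T : forall a, p a * ln (p a / q a) + q a * ln (q a / p a) =
    (q a - p a) * (D a - c) + (c + K) * (q a - p a).
  move=> a; rewrite (lndp (pi_gt0 n a) (pi_gt0 n.+1 a)) (lndp (pi_gt0 n.+1 a) (pi_gt0 n a)).
  have h := lnqp a.
  have -> : ln (p a) - ln (q a) = - (D a + K) by lra.
  rewrite h; ring.
have KLs : KL p q + KL q p = \sum_a (q a - p a) * (D a - c).
  transitivity (\sum_a (p a * ln (p a / q a) + q a * ln (q a / p a))).
    by rewrite big_split.
  rewrite (eq_bigr _ (fun a _ => T a)) big_split -mulr_sumr sumrB (proj2 hp) (proj2 hq).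
  by rewrite subrr mulr0; apply: addr0.
have B : \sum_a (q a - p a) * (D a - c) <= rho * l1dist q p.
  rewrite /l1dist mulr_sumr; apply: ler_sum => a _.
  apply: le_trans (ler_norm _) _; rewrite normrM mulrC.
  by rewrite ler_wpM2r // ler_norml (Db a).
have c1rho : c1 * rho = 1 by rewrite /c1 /rho mulrA divfK ?gt_eqF // divff // pnatr_eq0.
have : c1 * (KL p q) + c0 * KL q p <= c1 * (KL p q + KL q p).
  by rewrite mulrDr lerD2l ler_wpM2r.
rewrite KLs => h.
have : c1 * \sum_a (q a - p a) * (D a - c) <= c1 * (rho * l1dist q p).
  by rewrite ler_wpM2l // divr_ge0 // ltW.
rewrite mulrA c1rho mul1r => h2.
rewrite -/p -/q.
have -> : c1 * (ln (Zs n.+1) - 0) - c0 * (ln (Zs n) - KL q p) -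
  (c1 * (ln (Zs n.+1) - KL p q) - c0 * (ln (Zs n) - 0)) = c1 * KL p q + c0 * KL q p by ring.
exact: le_trans h h2.
Qed.

Lemma step_bnd n : eta / n.+1%:R <= 2 * eta / (2 * n.+1%:R - 1).
Proof.
rewrite -natr1; set m := n%:R.
have m0 : 0 <= m by rewrite /m ler0n.
have e : 2 * eta / (2 * (m + 1) - 1) - eta / (m + 1) = eta / ((2 * m + 1) * (m + 1)).
  by field; apply/andP; split; apply: lt0r_neq0; lra.
have : 0 <= eta / ((2 * m + 1) * (m + 1)) by rewrite divr_ge0 ?ltW // mulr_gt0 //; lra.
lra.
Qed.

Lemma harm n : \sum_(1 <= t < n.+2) (2 * eta / (2 * t%:R - 1)) <= 2 * eta * (1 + ln n.+1%:R).
Proof.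
have He : 0 < eta := Heta.
elim: n => [|n IH].
  rewrite big_nat1 ln1 addr0 mulr1 (_ : 2 * 1%:R - 1 = 1 :> R) ?divr1 //.
  by rewrite mulr1; lra.
rewrite big_nat_recr //=.
have : 2 * eta / (2 * n.+2%:R - 1) <= 2 * eta * (ln n.+2%:R - ln n.+1%:R).
  have E2 : n.+2%:R = n%:R + 2 :> R by rewrite -addn2 natrD.
  have E1 : n.+1%:R = n%:R + 1 :> R by rewrite -addn1 natrD.
  rewrite E2 E1; set m := n%:R.
  have m0 : 0 <= m by rewrite /m ler0n.
  rewrite -lndp; try lra.
  have pos : 0 < (m + 2) / (m + 1) by rewrite divr_gt0 //; lra.
  have hl := ln_ge_1sub pos.
  have e1 : 1 - ((m + 2) / (m + 1))^-1 = (m + 2)^-1.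
    by field; apply/andP; split; apply: lt0r_neq0; lra.
  rewrite e1 in hl.
  have : 2 * eta / (2 * (m + 2) - 1) <= 2 * eta * (m + 2)^-1.
    have e : 2 * eta * (m + 2)^-1 - 2 * eta / (2 * (m + 2) - 1) =
        2 * eta * (m + 1) / ((m + 2) * (2 * m + 3)).
      by field; apply/andP; split; apply: lt0r_neq0; lra.
    have : 0 <= 2 * eta * (m + 1) / ((m + 2) * (2 * m + 3)).
      have hd : 0 < (m + 2) * (2 * m + 3) by apply: mulr_gt0; lra.
      have hn2 : 0 <= 2 * eta * (m + 1) by apply: mulr_ge0; [apply: mulr_ge0|]; lra.
      by apply: divr_ge0 => //; exact: ltW.
    lra.
  have : 2 * eta * (m + 2)^-1 <= 2 * eta * ln ((m + 2) / (m + 1)).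
    by rewrite ler_wpM2l // mulr_ge0 // ltW.
  lra.
lra.
Qed.


Lemma main_in :
  let pi := omd piref eta Q in
  let f := fobj piref eta Q in
  (forall t : nat, (1 <= t)%N ->
     (forall a, pi t.+1 a =
        piref a * expR (eta / t%:R * \sum_(1 <= k < t.+1) Q k a) /
        \sum_(b : A) piref b * expR (eta / t%:R * \sum_(1 <= k < t.+1) Q k b))
     /\ in_simplex (pi t.+1)
     /\ (forall p, in_simplex p ->
           \sum_(1 <= k < t.+1) f k p <= \sum_(1 <= k < t.+1) f k (pi t.+1))
     /\ (forall p, in_simplex p ->
           \sum_(1 <= k < t.+1) f k (pi t.+1) <= \sum_(1 <= k < t.+1) f k p ->
           p = pi t.+1))
  /\
  (forall t : nat, (1 <= t)%N ->
     l1dist (pi t.+1) (pi t) <= 2 * eta / (2 * t%:R - 1)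
     /\ f t (pi t.+1) - f t (pi t) <= 2 * eta / (2 * t%:R - 1))
  /\
  (forall (T : nat) (pstar : A -> R), (1 <= T)%N -> in_simplex pstar ->
     \sum_(1 <= t < T.+1) (f t pstar - f t (pi t)) <= 2 * eta * (1 + ln T%:R)).
Proof.
move=> pi f; rewrite /pi /f.
split.
  move=> t t1; split; first by move=> a; rewrite omd_closed.
  split; first exact: pi_simplex.
  split; first by move=> p hp; exact: F_max.
  by move=> p hp; exact: F_uniq.
split.
  move=> t; case: t => [//|n] _.
  have [h1 h2] := l1_step n; have h3 := step_bnd n.
  split; first exact: le_trans h1 h3.
  exact: le_trans h2 (le_trans h1 h3).
move=> T ps; case: T => [//|n] _ hps.
have b := BTL n.+1 hps.
have s : \sum_(1 <= t < n.+2) (fobj piref eta Q t (pi t.+1) - fobj piref eta Q t (pi t))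
    <= \sum_(1 <= t < n.+2) (2 * eta / (2 * t%:R - 1)).
  apply: ler_sum_nat => t /andP[t1 _]; case: t t1 => [//|m] _.
  have [h1 h2] := l1_step m; have h3 := step_bnd m.
  exact: le_trans h2 (le_trans h1 h3).
apply: le_trans _ (harm n); apply: le_trans _ s.
have L := lerD b (lexx (- \sum_(1 <= t < n.+2) fobj piref eta Q t (pi t))).
rewrite -!sumrB in L; exact: L.
Qed.

End Main.

Unset Implicit Arguments.

Theorem mainTheorem9 (R : realType) (A : finType) (piref : A -> R) (eta : R)
  (Q : nat -> A -> R)
  (Hpiref : in_simplex piref) (Hfull : forall a, 0 < piref a)
  (Heta : 0 < eta)
  (HQ : forall t a, (1 <= t)%N -> 0 <= Q t a <= 1) :
  let pi := omd piref eta Q in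
  let f := fobj piref eta Q in
  (* (i) *)
  (forall t : nat, (1 <= t)%N ->
     (forall a, pi t.+1 a =
        piref a * expR (eta / t%:R * \sum_(1 <= k < t.+1) Q k a) /
        \sum_(b : A) piref b * expR (eta / t%:R * \sum_(1 <= k < t.+1) Q k b))
     /\ in_simplex (pi t.+1)
     /\ (forall p, in_simplex p ->
           \sum_(1 <= k < t.+1) f k p <= \sum_(1 <= k < t.+1) f k (pi t.+1))
     /\ (forall p, in_simplex p ->
           \sum_(1 <= k < t.+1) f k (pi t.+1) <= \sum_(1 <= k < t.+1) f k p ->
           p = pi t.+1))
  /\
  (* (ii) *)
  (forall t : nat, (1 <= t)%N ->
     l1dist (pi t.+1) (pi t) <= 2 * eta / (2 * t%:R - 1)
     /\ f t (pi t.+1) - f t (pi t) <= 2 * eta / (2 * t%:R - 1))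
  /\
  (* (iii) *)
  (forall (T : nat) (pstar : A -> R), (1 <= T)%N -> in_simplex pstar ->
     \sum_(1 <= t < T.+1) (f t pstar - f t (pi t)) <= 2 * eta * (1 + ln T%:R)).
Proof. exact: (main_in Hpiref Hfull Heta HQ). Qed.
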